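(* Consider a classical elementary system with timelike four-momentum in explicit form (i) or (ii). Let $\mathbf A\colon\Gamma\to\mathbb R^3$ be $C^1$, invariant under spatial translations ($\{P_a,A_b\}=0$), transforming as a vector under spatial rotations ($\{J_{ab},A_c\}=\delta_{ac}A_b-\delta_{bc}A_a$), and invariant under time reversal ($\mathbf A\circ T_u=\mathbf A$). Then $\mathbf A\cdot\mathbf P=0$ on all of $\Gamma$.
   Context: Fix a positively oriented orthonormal basis $\{e_0=u,\dots,e_3\}$ of Minkowski space (signature $(-,+,+,+)$), speed of light $c>0$, $m>0$. Spatial indices raised/lowered with Kronecker delta; ${}^{(3)}\varepsilon_{abc}$ Levi-Civita symbol; $(\mathbf A\times\mathbf B)_a={}^{(3)}\varepsilon_{abc}A^bB^c$. Poisson bracket: $\omega(X_f,\cdot)=df$, $\{f,g\}=\omega(X_f,X_g)$, so $\{x^a,p_b\}=\delta^a_b$. (i) spin zero ($\mathbf s:=0$): $\Gamma=T^*\mathbb R^3\ni(\mathbf x,\mathbf p)$, $\omega=dx^a\wedge dp_a$; $P_a=p_a$, $P_0=-\sqrt{m^2c^2+\mathbf p^2}$, $J_{ab}=x_ap_b-x_bp_a$, $J_{a0}=P_0x_a$; time reversal $T_u(\mathbf x,\mathbf p)=(\mathbf x,-\mathbf p)$. (ii) spin $S>0$: $\Gamma=T^*\mathbb R^3\times\mathsf S^2\ni(\mathbf x,\mathbf p,\hat{\mathbf s})$, $\omega=dx^a\wedge dp_a+S\,d\Omega^2$; $\mathbf s=S\hat{\mathbf s}$, $\{s_a,s_b\}={}^{(3)}\varepsilon_{abc}s^c$,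 $\mathbf s$ Poisson-commuting with $\mathbf x,\mathbf p$; $P_a=p_a$, $P_0=-\sqrt{m^2c^2+\mathbf p^2}$, $J_{ab}=x_ap_b-x_bp_a+{}^{(3)}\varepsilon_{abc}s^c$, $J_{a0}=P_0x_a-\frac{(\mathbf p\times\mathbf s)_a}{mc-P_0}$; time reversal $T_u(\mathbf x,\mathbf p,\hat{\mathbf s})=(\mathbf x,-\mathbf p,-\hat{\mathbf s})$. *)

(* Defs.v *)
From HB Require Import structures.
From mathcomp Require Import all_boot all_order all_algebra.
From mathcomp Require Import all_classical all_reals all_analysis.
Set Implicit Arguments. Unset Strict Implicit. Unset Printing Implicit Defensive.
Import Order.TTheory GRing.Theory Num.Theory.
Import numFieldNormedType.Exports.
Local Open Scope ring_scope.

Section Defs.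
Variable R : realType.

Notation V3 := 'rV[R]_3.

Definition e3 (j : 'I_3) : V3 := delta_mx 0 j.

(* Levi-Civita symbol on indices {0,1,2}:
   eps a b c = (b-a)(c-a)(c-b)/2, which is +1 on even permutations of (0,1,2),
   -1 on odd ones and 0 when two indices coincide. *)
Definition eps3 (a b c : 'I_3) : R :=
  ((b%:Z - a%:Z) * (c%:Z - a%:Z) * (c%:Z - b%:Z))%:~R / 2.

Definition kdelta (a b : 'I_3) : R := (a == b)%:R.

Definition dot3 (u v : V3) : R := \sum_(a < 3) u 0 a * v 0 a.

Definition cross3 (u v : V3) : V3 :=
  \row_(a < 3) \sum_(b < 3) \sum_(c < 3) eps3 a b c * u 0 b * v 0 c.

(* C^1 on a finite-dimensional normed space: differentiable everywhere with
   continuous (directional, hence all partial) derivatives. *)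
Definition C1 (U W : normedModType R) (f : U -> W) : Prop :=
  (forall z, differentiable f z) /\ (forall v : U, continuous (fun z => 'D_v f z)).

Definition Gamma0 := (V3 * V3)%type.
Definition dx0 (a : 'I_3) : Gamma0 := (e3 a, 0).
Definition dp0 (a : 'I_3) : Gamma0 := (0, e3 a).

(* Poisson bracket of omega = dx^a /\ dp_a with {x^a,p_b} = delta^a_b *)
Definition pb0 (f g : Gamma0 -> R) (z : Gamma0) : R :=
  \sum_(a < 3) ('D_(dx0 a) f z * 'D_(dp0 a) g z - 'D_(dp0 a) f z * 'D_(dx0 a) g z).

Definition P0_i (a : 'I_3) (z : Gamma0) : R := z.2 0 a.
Definition P0_0 (m c : R) (z : Gamma0) : R := - Num.sqrt (m ^+ 2 * c ^+ 2 + dot3 z.2 z.2).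
Definition J0 (a b : 'I_3) (z : Gamma0) : R :=
  z.1 0 a * z.2 0 b - z.1 0 b * z.2 0 a.
Definition J0_0 (m c : R) (a : 'I_3) (z : Gamma0) : R := P0_0 m c z * z.1 0 a.
Definition T0 (z : Gamma0) : Gamma0 := (z.1, - z.2).

(* A point is (x, p, shat); Gamma itself is the subset where |shat| = 1.
   Functions on Gamma are represented by (C^1) functions on R^3 x R^3 x R^3,
   of which only the restriction to Gamma matters. *)
Definition Gamma1 := (V3 * V3 * V3)%type.
Definition on_Gamma1 (z : Gamma1) : Prop := dot3 z.2 z.2 = 1.
Definition x1 (z : Gamma1) : V3 := z.1.1.
Definition p1 (z : Gamma1) : V3 := z.1.2.
Definition sh1 (z : Gamma1) : V3 := z.2.
Definition dx1 (a : 'I_3) : Gamma1 := (e3 a, 0, 0).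
Definition dp1 (a : 'I_3) : Gamma1 := (0, e3 a, 0).
Definition ds1 (a : 'I_3) : Gamma1 := (0, 0, e3 a).

Definition grads (f : Gamma1 -> R) (z : Gamma1) : V3 := \row_(a < 3) 'D_(ds1 a) f z.

(* Poisson bracket of omega = dx^a /\ dp_a + S dOmega^2: the canonical part plus
   the sphere part  {f,g} = S^-1 shat . (grad_shat f x grad_shat g),
   i.e. s . (grad_s f x grad_s g) with s = S shat; this gives
   {s_a,s_b} = eps_abc s^c and {s, x} = {s, p} = 0, {x^a,p_b} = delta^a_b. *)
Definition pb1 (S : R) (f g : Gamma1 -> R) (z : Gamma1) : R :=
  \sum_(a < 3) ('D_(dx1 a) f z * 'D_(dp1 a) g z - 'D_(dp1 a) f z * 'D_(dx1 a) g z)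
  + S^-1 * dot3 (sh1 z) (cross3 (grads f z) (grads g z)).

Definition s1 (S : R) (z : Gamma1) : V3 := S *: sh1 z.
Definition P1_i (a : 'I_3) (z : Gamma1) : R := p1 z 0 a.
Definition P1_0 (m c : R) (z : Gamma1) : R := - Num.sqrt (m ^+ 2 * c ^+ 2 + dot3 (p1 z) (p1 z)).
Definition J1 (S : R) (a b : 'I_3) (z : Gamma1) : R :=
  x1 z 0 a * p1 z 0 b - x1 z 0 b * p1 z 0 a
  + \sum_(c < 3) eps3 a b c * s1 S z 0 c.
Definition J1_0 (S m c : R) (a : 'I_3) (z : Gamma1) : R :=
  P1_0 m c z * x1 z 0 a - cross3 (p1 z) (s1 S z) 0 a / (m * c - P1_0 m c z).
Definition T1 (z : Gamma1) : Gamma1 := (x1 z, - p1 z, - sh1 z).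

End Defs.
Arguments kdelta {R}.
Arguments eps3 {R}.
Arguments e3 {R}.
Arguments dx0 {R}.
Arguments dp0 {R}.
Arguments dx1 {R}.
Arguments dp1 {R}.
Arguments ds1 {R}.

(* Main.v *)
Require Import Defs.
From HB Require Import structures.
From mathcomp Require Import all_boot all_order all_algebra.
From mathcomp Require Import all_classical all_reals all_analysis.
From mathcomp Require Import ring lra.
Import Order.TTheory GRing.Theory Num.Theory.
Import numFieldNormedType.Exports.
Local Open Scope ring_scope.
Local Open Scope classical_set_scope.

Definition i0 : 'I_3 := @Ordinal 3 0 isT.
Definition i1 : 'I_3 := @Ordinal 3 1 isT.
Definition i2 : 'I_3 := @Ordinal 3 2 isT.

Lemma sum3 (V : nmodType) (F : 'I_3 -> V) : \sum_(i < 3) F i = F i0 + F i1 + F i2.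
Proof.
rewrite !big_ord_recr big_ord0 /= add0r.
by congr (F _ + F _ + F _); apply: val_inj.
Qed.

Lemma ord3 (i : 'I_3) : i = i0 \/ i = i1 \/ i = i2.
Proof.
case: i => [[|[|[|k]]] Hk]; [left|right;left|right;right|by []]; exact: val_inj.
Qed.

Lemma n01 : (i0 == i1) = false. Proof. by []. Qed.
Lemma n02 : (i0 == i2) = false. Proof. by []. Qed.
Lemma n10 : (i1 == i0) = false. Proof. by []. Qed.
Lemma n12 : (i1 == i2) = false. Proof. by []. Qed.
Lemma n20 : (i2 == i0) = false. Proof. by []. Qed.
Lemma n21 : (i2 == i1) = false. Proof. by []. Qed.
Definition neqs := (n01, n02, n10, n12, n20, n21, eqxx).
Lemma b1 (R : ringType) : true%:R = 1 :> R. Proof. by []. Qed.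
Lemma b0 (R : ringType) : false%:R = 0 :> R. Proof. by []. Qed.
Definition simps := (b1, b0, mul0r, mul1r, mulr0, mulr1, sub0r, subr0, oppr0, add0r, addr0).

Lemma auxT0 (R : realType) (X0 Y0 X1 Y1 X2 Y2 : R) :
  0*X0 - true%:R*Y0 + (0*X1 - false%:R*Y1) + (0*X2 - false%:R*Y2) = 0 -> Y0 = 0.
Proof. rewrite /=; lra. Qed.
Lemma auxT1 (R : realType) (X0 Y0 X1 Y1 X2 Y2 : R) :
  0*X0 - false%:R*Y0 + (0*X1 - true%:R*Y1) + (0*X2 - false%:R*Y2) = 0 -> Y1 = 0.
Proof. rewrite /=; lra. Qed.
Lemma auxT2 (R : realType) (X0 Y0 X1 Y1 X2 Y2 : R) :
  0*X0 - false%:R*Y0 + (0*X1 - false%:R*Y1) + (0*X2 - true%:R*Y2) = 0 -> Y2 = 0.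
Proof. rewrite /=; lra. Qed.

Lemma e000 (R : realType) : eps3 i0 i0 i0 = 0 :> R.
Proof. by rewrite /eps3 /= -[X in X%:~R]/(0%:Z) mul0r. Qed.
Lemma e001 (R : realType) : eps3 i0 i0 i1 = 0 :> R.
Proof. by rewrite /eps3 /= -[X in X%:~R]/(0%:Z) mul0r. Qed.
Lemma e002 (R : realType) : eps3 i0 i0 i2 = 0 :> R.
Proof. by rewrite /eps3 /= -[X in X%:~R]/(0%:Z) mul0r. Qed.
Lemma e010 (R : realType) : eps3 i0 i1 i0 = 0 :> R.
Proof. by rewrite /eps3 /= -[X in X%:~R]/(0%:Z) mul0r. Qed.
Lemma e011 (R : realType) : eps3 i0 i1 i1 = 0 :> R.
Proof. by rewrite /eps3 /= -[X in X%:~R]/(0%:Z) mul0r. Qed.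
Lemma e012 (R : realType) : eps3 i0 i1 i2 = 1 :> R.
Proof. by rewrite /eps3 /= -[X in X%:~R]/(2%:Z) mulfV // intr_eq0. Qed.
Lemma e020 (R : realType) : eps3 i0 i2 i0 = 0 :> R.
Proof. by rewrite /eps3 /= -[X in X%:~R]/(0%:Z) mul0r. Qed.
Lemma e021 (R : realType) : eps3 i0 i2 i1 = -1 :> R.
Proof. by rewrite /eps3 /= -[X in X%:~R]/(- 2%:Z) intrN mulNr mulfV // intr_eq0. Qed.
Lemma e022 (R : realType) : eps3 i0 i2 i2 = 0 :> R.
Proof. by rewrite /eps3 /= -[X in X%:~R]/(0%:Z) mul0r. Qed.
Lemma e100 (R : realType) : eps3 i1 i0 i0 = 0 :> R.
Proof. by rewrite /eps3 /= -[X in X%:~R]/(0%:Z) mul0r. Qed.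
Lemma e101 (R : realType) : eps3 i1 i0 i1 = 0 :> R.
Proof. by rewrite /eps3 /= -[X in X%:~R]/(0%:Z) mul0r. Qed.
Lemma e102 (R : realType) : eps3 i1 i0 i2 = -1 :> R.
Proof. by rewrite /eps3 /= -[X in X%:~R]/(- 2%:Z) intrN mulNr mulfV // intr_eq0. Qed.
Lemma e110 (R : realType) : eps3 i1 i1 i0 = 0 :> R.
Proof. by rewrite /eps3 /= -[X in X%:~R]/(0%:Z) mul0r. Qed.
Lemma e111 (R : realType) : eps3 i1 i1 i1 = 0 :> R.
Proof. by rewrite /eps3 /= -[X in X%:~R]/(0%:Z) mul0r. Qed.
Lemma e112 (R : realType) : eps3 i1 i1 i2 = 0 :> R.
Proof. by rewrite /eps3 /= -[X in X%:~R]/(0%:Z) mul0r. Qed.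
Lemma e120 (R : realType) : eps3 i1 i2 i0 = 1 :> R.
Proof. by rewrite /eps3 /= -[X in X%:~R]/(2%:Z) mulfV // intr_eq0. Qed.
Lemma e121 (R : realType) : eps3 i1 i2 i1 = 0 :> R.
Proof. by rewrite /eps3 /= -[X in X%:~R]/(0%:Z) mul0r. Qed.
Lemma e122 (R : realType) : eps3 i1 i2 i2 = 0 :> R.
Proof. by rewrite /eps3 /= -[X in X%:~R]/(0%:Z) mul0r. Qed.
Lemma e200 (R : realType) : eps3 i2 i0 i0 = 0 :> R.
Proof. by rewrite /eps3 /= -[X in X%:~R]/(0%:Z) mul0r. Qed.
Lemma e201 (R : realType) : eps3 i2 i0 i1 = 1 :> R.
Proof. by rewrite /eps3 /= -[X in X%:~R]/(2%:Z) mulfV // intr_eq0. Qed.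
Lemma e202 (R : realType) : eps3 i2 i0 i2 = 0 :> R.
Proof. by rewrite /eps3 /= -[X in X%:~R]/(0%:Z) mul0r. Qed.
Lemma e210 (R : realType) : eps3 i2 i1 i0 = -1 :> R.
Proof. by rewrite /eps3 /= -[X in X%:~R]/(- 2%:Z) intrN mulNr mulfV // intr_eq0. Qed.
Lemma e211 (R : realType) : eps3 i2 i1 i1 = 0 :> R.
Proof. by rewrite /eps3 /= -[X in X%:~R]/(0%:Z) mul0r. Qed.
Lemma e212 (R : realType) : eps3 i2 i1 i2 = 0 :> R.
Proof. by rewrite /eps3 /= -[X in X%:~R]/(0%:Z) mul0r. Qed.
Lemma e220 (R : realType) : eps3 i2 i2 i0 = 0 :> R.
Proof. by rewrite /eps3 /= -[X in X%:~R]/(0%:Z) mul0r. Qed.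
Lemma e221 (R : realType) : eps3 i2 i2 i1 = 0 :> R.
Proof. by rewrite /eps3 /= -[X in X%:~R]/(0%:Z) mul0r. Qed.
Lemma e222 (R : realType) : eps3 i2 i2 i2 = 0 :> R.
Proof. by rewrite /eps3 /= -[X in X%:~R]/(0%:Z) mul0r. Qed.
Definition epsv := (e000, e001, e002, e010, e011, e012, e020, e021, e022, e100, e101, e102, e110, e111, e112, e120, e121, e122, e200, e201, e202, e210, e211, e212, e220, e221, e222).

Section H.
Variable R : realType.

Definition crossv (u v : 'rV[R]_3) : 'rV[R]_3 := \row_(i < 3)
  (if i == i0 then u 0 i1 * v 0 i2 - u 0 i2 * v 0 i1
   else if i == i1 then u 0 i2 * v 0 i0 - u 0 i0 * v 0 i2
   else u 0 i0 * v 0 i1 - u 0 i1 * v 0 i0).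

Lemma is_derive_affine (U W : normedModType R) (f : U -> W) a v d :
  (forall h : R, h != 0 -> f (h *: v + a) - f a = h *: d) -> is_derive a v f d.
Proof.
move=> H.
have E : (fun h : R => h^-1 *: ((f \o shift a) (h *: v) - f a)) @ 0^' --> d.
  apply: cvg_near_cst; near=> h.
  have h0 : h != 0 by near: h; exact: nbhs_dnbhs_neq.
  by rewrite /= H // scalerA mulVf // scale1r.
have Dd : derivable f a v by apply: cvgP E.
by constructor => //; apply: cvg_lim.
Unshelve. all: by end_near. Qed.

Lemma is_derive_pair (U W1 W2 : normedModType R) (f1 : U -> W1) (f2 : U -> W2)
  a v d1 d2 : is_derive a v f1 d1 -> is_derive a v f2 d2 ->
  is_derive a v (fun s => (f1 s, f2 s)) (d1, d2).
Proof.
move=> [D1 <-] [D2 <-].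
have E : (fun h : R => h^-1 *: (((fun s => (f1 s, f2 s)) \o shift a) (h *: v)
           - (f1 a, f2 a))) @ 0^' --> ('D_v f1 a, 'D_v f2 a).
  exact: (cvg_pair D1 D2).
have Dd : derivable (fun s => (f1 s, f2 s)) a v by apply: cvgP E.
by constructor => //; apply: cvg_lim.
Qed.

Lemma is_derive_scl (W : normedModType R) (k : R -> R) (dk : R) (w : W) (t : R) :
  is_derive t 1 k dk -> is_derive t 1 (fun s => k s *: w) (dk *: w).
Proof.
move=> [D1 <-].
have E : (fun h : R => h^-1 *: (((fun s => k s *: w) \o shift t) (h *: 1)
           - k t *: w)) @ 0^' --> ('D_1 k t *: w).
  have -> : (fun h : R => h^-1 *: (((fun s => k s *: w) \o shift t) (h *: 1)
           - k t *: w)) = (fun h : R => (h^-1 *: ((k \o shift t) (h *: (1:R)) - k t)) *: w).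
    by apply/funext => h /=; rewrite -scalerBl scalerA.
  exact: cvgZr_tmp.
have Dd : derivable (fun s => k s *: w) t 1 by apply: cvgP E.
by constructor => //; apply: cvg_lim.
Qed.

Lemma chain_rule (U : normedModType R) (G : U -> R) (g : R -> U) t dg :
  differentiable G (g t) -> is_derive t 1 g dg ->
  is_derive t 1 (G \o g) ('D_dg G (g t)).
Proof.
move=> dG Dg.
have dgt : differentiable g t by apply/derivable1_diffP; exact: ex_derive.
have dc : differentiable (G \o g) t by exact: differentiable_comp.
have Dd : derivable (G \o g) t 1 by apply/derivable1_diffP.
constructor => //.
have Hg : 'd g t 1 = dg by rewrite -deriveE // derive_val.
by rewrite deriveE // diff_comp //= Hg [RHS]deriveE.
Qed.

Lemma derive_lin (U W : normedModType R) (f : U -> W) y (v : 'I_3 -> U) (k : 'I_3 -> R) :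
  differentiable f y -> 'D_(\sum_i k i *: v i) f y = \sum_i k i *: 'D_(v i) f y.
Proof.
move=> df; rewrite deriveE // linear_sum; apply: eq_bigr => i _.
by rewrite linearZ /= deriveE.
Qed.

Lemma is_derive_sumM (U : normedModType R) (F G : 'I_3 -> U -> R) y v dF dG :
  (forall c, is_derive y v (F c) (dF c)) -> (forall c, is_derive y v (G c) (dG c)) ->
  is_derive y v (fun w => \sum_c F c w * G c w) (\sum_c (F c y * dG c + G c y * dF c)).
Proof.
move=> HF HG.
have -> : (fun w => \sum_c F c w * G c w) = \sum_c (F c * G c).
  by apply/funext => w; rewrite fct_sumE.
exact: is_derive_sum.
Qed.

Lemma Dc02 (c : 'I_3) (y v : Gamma0 R) : is_derive y v (fun w : Gamma0 R => w.2 0 c) (v.2 0 c).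
Proof. apply: is_derive_affine => h _ /=; rewrite !mxE; rewrite addrK; by []. Qed.
Lemma Dc01 (c : 'I_3) (y v : Gamma0 R) : is_derive y v (fun w : Gamma0 R => w.1 0 c) (v.1 0 c).
Proof. apply: is_derive_affine => h _ /=; rewrite !mxE; rewrite addrK; by []. Qed.


Lemma D02 (c : 'I_3) (y v : Gamma0 R) : 'D_v (fun w : Gamma0 R => w.2 0 c) y = v.2 0 c.
Proof. by have [] := Dc02 c y v. Qed.
Lemma D01 (c : 'I_3) (y v : Gamma0 R) : 'D_v (fun w : Gamma0 R => w.1 0 c) y = v.1 0 c.
Proof. by have [] := Dc01 c y v. Qed.

Lemma DJ0 a b (y v : Gamma0 R) : 'D_v (J0 a b) y =
  v.1 0 a * y.2 0 b + y.1 0 a * v.2 0 b - (v.1 0 b * y.2 0 a + y.1 0 b * v.2 0 a).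
Proof.
have -> : J0 a b = (fun w : Gamma0 R => w.1 0 a) * (fun w => w.2 0 b)
   - (fun w : Gamma0 R => w.1 0 b) * (fun w => w.2 0 a) by apply/funext.
have [_ ->] := is_deriveB (is_deriveM (Dc01 a y v) (Dc02 b y v))
   (is_deriveM (Dc01 b y v) (Dc02 a y v)).
have sm : forall x y : R, x *: y = x * y by [].
by rewrite /= !sm; ring.
Qed.

Lemma sum_e3 (F : 'I_3 -> R) a : \sum_d ('e_d : 'rV[R]_3) 0 a * F d = F a.
Proof.
rewrite (bigD1 a) //= big1 ?addr0 => [|d /negbTE da]; rewrite mxE ?eqxx ?mul1r //.
by rewrite eq_sym da mul0r.
Qed.

Definition crs (n q : 'I_3 -> R) (d : 'I_3) : R :=
  if d == i0 then n i1 * q i2 - n i2 * q i1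
  else if d == i1 then n i2 * q i0 - n i0 * q i2
  else n i0 * q i1 - n i1 * q i0.

Lemma alg0 (n q A : 'I_3 -> R) (D : 'I_3 -> 'I_3 -> R) :
 (forall a b c, q b * D a c - q a * D b c = kdelta a c * A b - kdelta b c * A a) ->
 \sum_c (A c * crs n q c + q c * \sum_d crs n q d * D d c) = 0.
Proof.
move=> H.
pose E a b c := q b * D a c - q a * D b c - (kdelta a c * A b - kdelta b c * A a).
have E0 : forall a b c, E a b c = 0 by move=> a b c; rewrite /E H subrr.
apply: (@etrans _ _ (- (q i0 * (n i0 * E i1 i2 i0 + n i1 * E i2 i0 i0 + n i2 * E i0 i1 i0)
  + q i1 * (n i0 * E i1 i2 i1 + n i1 * E i2 i0 i1 + n i2 * E i0 i1 i1)
  + q i2 * (n i0 * E i1 i2 i2 + n i1 * E i2 i0 i2 + n i2 * E i0 i1 i2)))).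
  rewrite /E /kdelta /crs !sum3 !neqs !b1 !b0; ring.
by rewrite !E0; ring.
Qed.

Definition cv (n : 'I_3 -> R) (p : 'rV[R]_3) : 'rV[R]_3 :=
  \row_i crs n (fun j => p 0 j) i.

Lemma rowE2 (a b : R) (M N : 'rV[R]_3) j : (a *: M + b *: N) 0 j = a * M 0 j + b * N 0 j.
Proof. by rewrite !mxE. Qed.

Lemma eq_by (x y k : R) : x - y = k -> k = 0 -> x = y.
Proof. by move=> <- /eqP; rewrite subr_eq0 => /eqP. Qed.

Lemma rot_vec (n : 'I_3 -> R) (p : 'rV[R]_3) (t : R) :
  n i0 ^+ 2 + n i1 ^+ 2 + n i2 ^+ 2 = 1 ->
  n i0 * p 0 i0 + n i1 * p 0 i1 + n i2 * p 0 i2 = 0 ->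
  forall d, - sin t * p 0 d + cos t * cv n p 0 d
    = crs n (fun j => cos t * p 0 j + sin t * cv n p 0 j) d.
Proof.
move=> NN NP d; rewrite /cv /crs.
case: (ord3 d) => [->|[->|->]]; rewrite !mxE !neqs /= ?mxE ?neqs /=.
- apply: (@eq_by _ _ (- sin t * (n i0 * (n i0 * p 0 i0 + n i1 * p 0 i1 + n i2 * p 0 i2)
     - p 0 i0 * (n i0 ^+ 2 + n i1 ^+ 2 + n i2 ^+ 2 - 1)))); first ring.
  by rewrite NN NP subrr; ring.
- apply: (@eq_by _ _ (- sin t * (n i1 * (n i0 * p 0 i0 + n i1 * p 0 i1 + n i2 * p 0 i2)
     - p 0 i1 * (n i0 ^+ 2 + n i1 ^+ 2 + n i2 ^+ 2 - 1)))); first ring.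
  by rewrite NN NP subrr; ring.
- apply: (@eq_by _ _ (- sin t * (n i2 * (n i0 * p 0 i0 + n i1 * p 0 i1 + n i2 * p 0 i2)
     - p 0 i2 * (n i0 ^+ 2 + n i1 ^+ 2 + n i2 ^+ 2 - 1)))); first ring.
  by rewrite NN NP subrr; ring.
Qed.

Lemma dp_decomp (w : 'rV[R]_3) : ((0 : 'rV[R]_3), w) = \sum_d w 0 d *: dp0 d :> Gamma0 R.
Proof.
rewrite sum3 /dp0 /=.
rewrite [w in LHS]row_sum_delta sum3.
apply/pair_equal_spec; split => /=.
  by rewrite !scaler0 !addr0.
by [].
Qed.

Lemma perp1 (u : 'I_3 -> R) : exists n : 'I_3 -> R,
  n i0 ^+ 2 + n i1 ^+ 2 + n i2 ^+ 2 = 1 /\ n i0 * u i0 + n i1 * u i1 + n i2 * u i2 = 0.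
Proof.
have [h|h] := eqVneq (u i1 ^+ 2 + u i2 ^+ 2) 0.
  have u1 : u i1 = 0 by nra.
  exists (fun i => if i == i1 then 1 else 0); rewrite !neqs /= u1; split; ring.
have hp : 0 < u i1 ^+ 2 + u i2 ^+ 2.
  by rewrite lt_def h /=; nra.
pose r := Num.sqrt (u i1 ^+ 2 + u i2 ^+ 2).
have r0 : 0 < r by rewrite /r sqrtr_gt0.
have r2 : r ^+ 2 = u i1 ^+ 2 + u i2 ^+ 2 by rewrite /r sqr_sqrtr // ltW.
have rn0 : r != 0 by rewrite gt_eqF.
exists (fun i => if i == i0 then 0 else if i == i1 then u i2 / r else - u i1 / r).
rewrite !neqs /=; split; last by field.
apply: (@etrans _ _ ((u i1 ^+ 2 + u i2 ^+ 2) / r ^+ 2)); first by field.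
by rewrite -r2 divff // expf_neq0.
Qed.

Section Case0.
Variable A : Gamma0 R -> 'rV[R]_3.
Hypothesis dA : forall z, differentiable A z.
Hypothesis HT : forall a b z, pb0 (P0_i a) (fun w => A w 0 b) z = 0.
Hypothesis HR : forall a b c z, pb0 (J0 a b) (fun w => A w 0 c) z
   = kdelta a c * A z 0 b - kdelta b c * A z 0 a.

Lemma dAc c y : differentiable (fun w => A w 0 c) y.
Proof. exact: (differentiable_comp (dA y) (differentiable_coord _ 0 c)). Qed.

Lemma DX0 a b z : 'D_(dx0 a) (fun w => A w 0 b) z = 0.
Proof.
have H := HT a b z; rewrite /pb0 sum3 /P0_i !D02 /dp0 /e3 /= !mxE /= in H.
case: (ord3 a) H => [->|[->|->]]; rewrite !neqs.
- by with_strategy opaque [derive] apply: auxT0.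
- by with_strategy opaque [derive] apply: auxT1.
- by with_strategy opaque [derive] apply: auxT2.
Qed.

Lemma ROT0 (a b c : 'I_3) (z : Gamma0 R) : z.2 0 b * 'D_(dp0 a) (fun w => A w 0 c) z
   - z.2 0 a * 'D_(dp0 b) (fun w => A w 0 c) z
   = kdelta a c * A z 0 b - kdelta b c * A z 0 a.
Proof.
rewrite -HR /pb0.
have E : forall d, 'D_(dx0 d) (J0 a b) z * 'D_(dp0 d) (fun w => A w 0 c) z
   - 'D_(dp0 d) (J0 a b) z * 'D_(dx0 d) (fun w => A w 0 c) z
   = ('e_d : 'rV[R]_3) 0 a * (z.2 0 b * 'D_(dp0 d) (fun w => A w 0 c) z)
     - ('e_d : 'rV[R]_3) 0 b * (z.2 0 a * 'D_(dp0 d) (fun w => A w 0 c) z).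
  move=> d; rewrite DJ0 DX0 /dx0 /= !mxE /=.
  by with_strategy opaque [derive] ring.
rewrite (eq_bigr _ (fun d _ => E d)) sumrB !sum_e3.
by [].
Qed.

Hypothesis HTR : forall z, A (T0 z) = A z.

Lemma main0 (z : Gamma0 R) : \sum_(a < 3) A z 0 a * P0_i a z = 0.
Proof.
have [n [NN NP]] := perp1 (fun j => z.2 0 j).
pose p := z.2. pose x := z.1.
pose u := cv n p.
pose g := fun s : R => ((x, cos s *: p + sin s *: u) : Gamma0 R).
pose phi := fun s : R => \sum_c A (g s) 0 c * (cos s * p 0 c + sin s * u 0 c).
have Dphi : forall t : R, is_derive t 1 phi 0.
  move=> t.
  pose wv := (- sin t) *: p + cos t *: u.
  have Dg : is_derive t 1 g ((0 : 'rV[R]_3), wv).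
    apply: (@is_derive_pair _ _ _ (fun _ => x) (fun s => cos s *: p + sin s *: u) t 1 0 wv).
    by apply: is_deriveD; apply: is_derive_scl.
  have DF : forall c, is_derive t 1 ((fun w => A w 0 c) \o g)
      ('D_((0:'rV[R]_3), wv) (fun w => A w 0 c) (g t)).
    by move=> c; apply: chain_rule => //; exact: dAc.
  have DG : forall c, is_derive t 1 (fun s => cos s * p 0 c + sin s * u 0 c)
      (- sin t * p 0 c + cos t * u 0 c).
    by move=> c; apply: is_deriveD; apply: (@is_derive_scl R^o).
  have D := @is_derive_sumM _ (fun c => (fun w => A w 0 c) \o g)
    (fun c s => cos s * p 0 c + sin s * u 0 c) t 1 _ _ DF DG.
  apply: (is_derive_eq D).
  pose y := g t.
  pose q := fun j => cos t * p 0 j + sin t * u 0 j.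
  pose Dm := fun d c => 'D_(dp0 d) (fun w : Gamma0 R => A w 0 c) y.
  have HR' : forall a b c, q b * Dm a c - q a * Dm b c
      = kdelta a c * A y 0 b - kdelta b c * A y 0 a.
    move=> a b c; have := ROT0 a b c y.
    have -> : y.2 = cos t *: p + sin t *: u by [].
    by rewrite !rowE2.
  have AL := @alg0 n q (fun c => A y 0 c) Dm HR'.
  apply: (etrans _ AL); apply: eq_bigr => c _.
  rewrite dp_decomp derive_lin; last exact: dAc.
  rewrite (rot_vec _ _ _ NN NP).
  under eq_bigr => d _ do rewrite rowE2 (rot_vec _ _ _ NN NP).
  by [].
have E := @is_derive_0_is_cst _ phi 0 pi Dphi.
have g0 : g 0 = z by rewrite /g cos0 sin0 scale1r scale0r addr0 /x /p -surjective_pairing.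
have gpi : g pi = T0 z by rewrite /g cospi sinpi scaleN1r scale0r addr0.
rewrite /phi g0 gpi HTR cos0 sin0 cospi sinpi in E.
pose S := \sum_c A z 0 c * p 0 c.
have E1 : \sum_c A z 0 c * (1 * p 0 c + 0 * u 0 c) = S.
  by apply: eq_bigr => c _; ring.
have E2 : \sum_c A z 0 c * (-1 * p 0 c + 0 * u 0 c) = - S.
  by rewrite /S -sumrN; apply: eq_bigr => c _; ring.
rewrite E1 E2 in E.
have -> : \sum_(a < 3) A z 0 a * P0_i a z = S by [].
lra.
Qed.
End Case0.

Lemma cross3E (u v : 'rV[R]_3) i :
  cross3 u v 0 i = crs (fun j => u 0 j) (fun j => v 0 j) i.
Proof.
rewrite /cross3 mxE /crs !sum3.
by case: (ord3 i) => [->|[->|->]]; rewrite !neqs !epsv; ring.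
Qed.

Lemma dot3E (u v : 'rV[R]_3) : dot3 u v = u 0 i0 * v 0 i0 + u 0 i1 * v 0 i1 + u 0 i2 * v 0 i2.
Proof. by rewrite /dot3 sum3. Qed.

Lemma Dcx (c : 'I_3) (y v : Gamma1 R) : is_derive y v (fun w : Gamma1 R => w.1.1 0 c) (v.1.1 0 c).
Proof. apply: is_derive_affine => h _ /=; rewrite !mxE; rewrite addrK; by []. Qed.
Lemma Dcp (c : 'I_3) (y v : Gamma1 R) : is_derive y v (fun w : Gamma1 R => w.1.2 0 c) (v.1.2 0 c).
Proof. apply: is_derive_affine => h _ /=; rewrite !mxE; rewrite addrK; by []. Qed.
Lemma Dcs (c : 'I_3) (y v : Gamma1 R) : is_derive y v (fun w : Gamma1 R => w.2 0 c) (v.2 0 c).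
Proof. apply: is_derive_affine => h _ /=; rewrite !mxE; rewrite addrK; by []. Qed.
Lemma Dxv (c : 'I_3) (y v : Gamma1 R) : 'D_v (fun w : Gamma1 R => w.1.1 0 c) y = v.1.1 0 c.
Proof. by have [] := Dcx c y v. Qed.
Lemma Dpv (c : 'I_3) (y v : Gamma1 R) : 'D_v (fun w : Gamma1 R => w.1.2 0 c) y = v.1.2 0 c.
Proof. by have [] := Dcp c y v. Qed.

Lemma sum_e3c (F : 'I_3 -> R) d : \sum_c F c * ('e_d : 'rV[R]_3) 0 c = F d.
Proof.
rewrite (bigD1 d) //= big1 ?addr0 => [|c /negbTE dc]; rewrite mxE ?eqxx ?mulr1 //.
by rewrite dc mulr0.
Qed.

Lemma DJ1 (S : R) a b (y v : Gamma1 R) : 'D_v (J1 S a b) y =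
  v.1.1 0 a * y.1.2 0 b + y.1.1 0 a * v.1.2 0 b - (v.1.1 0 b * y.1.2 0 a + y.1.1 0 b * v.1.2 0 a)
  + \sum_c eps3 a b c * (S * v.2 0 c).
Proof.
have -> : J1 S a b = (fun w : Gamma1 R => w.1.1 0 a) * (fun w => w.1.2 0 b)
   - (fun w : Gamma1 R => w.1.1 0 b) * (fun w => w.1.2 0 a)
   + (fun w : Gamma1 R => \sum_c eps3 a b c * (S * w.2 0 c)).
  apply/funext => w; rewrite /J1 /x1 /p1 /s1 /sh1 /=; congr (_ + _).
  by apply: eq_bigr => c _; rewrite mxE.
have Ls : is_derive y v (fun w : Gamma1 R => \sum_c eps3 a b c * (S * w.2 0 c))
   (\sum_c eps3 a b c * (S * v.2 0 c)).
  apply: is_derive_affine => h _ /=; rewrite -sumrB scaler_sumr; apply: eq_bigr => c _.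
  rewrite !mxE; have sm : forall x y : R, x *: y = x * y by [].
  by rewrite sm; ring.
have [_ ->] := is_deriveD (is_deriveB (is_deriveM (Dcx a y v) (Dcp b y v))
   (is_deriveM (Dcx b y v) (Dcp a y v))) Ls.
have sm : forall x y : R, x *: y = x * y by [].
by rewrite /= !sm; ring.
Qed.

Lemma perp2 (u s : 'I_3 -> R) : s i0 ^+ 2 + s i1 ^+ 2 + s i2 ^+ 2 = 1 ->
  exists n : 'I_3 -> R, n i0 ^+ 2 + n i1 ^+ 2 + n i2 ^+ 2 = 1 /\
    n i0 * u i0 + n i1 * u i1 + n i2 * u i2 = 0 /\
    n i0 * s i0 + n i1 * s i1 + n i2 * s i2 = 0.
Proof.
move=> SS.
pose w := crs u s.
have [h|h] := eqVneq (w i0 ^+ 2 + w i1 ^+ 2 + w i2 ^+ 2) 0.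
  have w0 : w i0 = 0 by nra.
  have w1 : w i1 = 0 by nra.
  have w2 : w i2 = 0 by nra.
  have [n [NN NS]] := perp1 s.
  exists n; split => //; split => //.
  apply: (@eq_by _ _ ((n i0 * s i0 + n i1 * s i1 + n i2 * s i2) * (s i0 * u i0 + s i1 * u i1 + s i2 * u i2)
     + (n i0 * (s i1 * w i2 - s i2 * w i1) + n i1 * (s i2 * w i0 - s i0 * w i2)
        + n i2 * (s i0 * w i1 - s i1 * w i0))
     + (n i0 * u i0 + n i1 * u i1 + n i2 * u i2) * (1 - (s i0 ^+ 2 + s i1 ^+ 2 + s i2 ^+ 2)))).
    by rewrite /w /crs !neqs /=; ring.
  by rewrite NS w0 w1 w2 SS; ring.
have hp : 0 < w i0 ^+ 2 + w i1 ^+ 2 + w i2 ^+ 2.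
  by rewrite lt_def h /=; nra.
pose r := Num.sqrt (w i0 ^+ 2 + w i1 ^+ 2 + w i2 ^+ 2).
have r0 : 0 < r by rewrite /r sqrtr_gt0.
have r2 : r ^+ 2 = w i0 ^+ 2 + w i1 ^+ 2 + w i2 ^+ 2 by rewrite /r sqr_sqrtr // ltW.
have rn0 : r != 0 by rewrite gt_eqF.
exists (fun i => w i / r); split.
  apply: (@etrans _ _ ((w i0 ^+ 2 + w i1 ^+ 2 + w i2 ^+ 2) / r ^+ 2)); first by field.
  by rewrite -r2 divff // expf_neq0.
by split; rewrite /w /crs !neqs /=; field.
Qed.

Lemma rot_vec2 (n : 'I_3 -> R) (p : 'rV[R]_3) (t : R) :
  n i0 ^+ 2 + n i1 ^+ 2 + n i2 ^+ 2 = 1 ->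
  n i0 * p 0 i0 + n i1 * p 0 i1 + n i2 * p 0 i2 = 0 ->
  p 0 i0 ^+ 2 + p 0 i1 ^+ 2 + p 0 i2 ^+ 2 = 1 ->
  dot3 (cos t *: p + sin t *: cv n p) (cos t *: p + sin t *: cv n p) = 1.
Proof.
move=> NN NP PP.
rewrite dot3E !rowE2 /cv !mxE /crs !neqs /=.
apply: (@eq_by _ _ (cos t ^+ 2 * (p 0 i0 ^+ 2 + p 0 i1 ^+ 2 + p 0 i2 ^+ 2 - 1)
   + sin t ^+ 2 * ((n i0 ^+ 2 + n i1 ^+ 2 + n i2 ^+ 2) * (p 0 i0 ^+ 2 + p 0 i1 ^+ 2 + p 0 i2 ^+ 2)
      - (n i0 * p 0 i0 + n i1 * p 0 i1 + n i2 * p 0 i2) ^+ 2 - 1)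
   + (cos t ^+ 2 + sin t ^+ 2 - 1))); first ring.
by rewrite NN NP PP cos2Dsin2; ring.
Qed.

Lemma d12_decomp (w1 w2 : 'rV[R]_3) :
  (((0 : 'rV[R]_3), w1), w2) = \sum_d w1 0 d *: dp1 d + \sum_d w2 0 d *: ds1 d :> Gamma1 R.
Proof.
rewrite !sum3 /dp1 /ds1 /=.
rewrite [w1 in LHS]row_sum_delta [w2 in LHS]row_sum_delta !sum3.
apply/pair_equal_spec; split => /=.
  apply/pair_equal_spec; split => /=.
    by rewrite !scaler0 !addr0.
  by rewrite !scaler0 !addr0.
by rewrite !scaler0 !add0r.
Qed.

Lemma derive_lin2 (W : normedModType R) (f : Gamma1 R -> W) y (w1 w2 : 'rV[R]_3) :
  differentiable f y -> 'D_(((0 : 'rV[R]_3), w1), w2) f y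
   = \sum_d w1 0 d *: 'D_(dp1 d) f y + \sum_d w2 0 d *: 'D_(ds1 d) f y.
Proof.
move=> df; rewrite d12_decomp deriveE // linearD !linear_sum.
by congr (_ + _); apply: eq_bigr => i _; rewrite linearZ /= deriveE.
Qed.

Lemma alg1 (n q sg A : 'I_3 -> R) (D DS : 'I_3 -> 'I_3 -> R) :
 (forall a b c, q b * D a c - q a * D b c
    + \sum_i sg i * crs (eps3 a b) (fun j => DS j c) i
    = kdelta a c * A b - kdelta b c * A a) ->
 \sum_c (A c * crs n q c + q c * (\sum_d crs n q d * D d c + \sum_d crs n sg d * DS d c)) = 0.
Proof.
move=> H.
pose E a b c := q b * D a c - q a * D b c + \sum_i sg i * crs (eps3 a b) (fun j => DS j c) i
   - (kdelta a c * A b - kdelta b c * A a).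
have E0 : forall a b c, E a b c = 0 by move=> a b c; rewrite /E H subrr.
apply: (@etrans _ _ (- (q i0 * (n i0 * E i1 i2 i0 + n i1 * E i2 i0 i0 + n i2 * E i0 i1 i0)
  + q i1 * (n i0 * E i1 i2 i1 + n i1 * E i2 i0 i1 + n i2 * E i0 i1 i1)
  + q i2 * (n i0 * E i1 i2 i2 + n i1 * E i2 i0 i2 + n i2 * E i0 i1 i2)))).
  rewrite /E /kdelta /crs !sum3 !neqs !b1 !b0 !epsv; ring.
by rewrite !E0; ring.
Qed.

End H.
Arguments crossv {R}.
Arguments is_derive_affine {R}.
Arguments is_derive_pair {R}.
Arguments is_derive_scl {R}.
Arguments chain_rule {R}.
Arguments derive_lin {R}.
Arguments is_derive_sumM {R}.
Arguments Dc02 {R}.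
Arguments Dc01 {R}.
Arguments D02 {R}.
Arguments D01 {R}.
Arguments DJ0 {R}.
Arguments sum_e3 {R}.
Arguments crs {R}.
Arguments alg0 {R}.
Arguments cv {R}.
Arguments rowE2 {R}.
Arguments eq_by {R}.
Arguments rot_vec {R}.
Arguments dp_decomp {R}.
Arguments perp1 {R}.
Arguments cross3E {R}.
Arguments dot3E {R}.
Arguments Dcx {R}.
Arguments Dcp {R}.
Arguments Dcs {R}.
Arguments Dxv {R}.
Arguments Dpv {R}.
Arguments sum_e3c {R}.
Arguments DJ1 {R}.
Arguments perp2 {R}.
Arguments rot_vec2 {R}.
Arguments d12_decomp {R}.
Arguments derive_lin2 {R}.
Arguments alg1 {R}.

Section H2.
Variable R : realType.

Lemma cross0l (v : 'rV[R]_3) : cross3 0 v = 0.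
Proof.
apply/rowP => i; rewrite cross3E /crs !mxE.
by case: (ord3 i) => [->|[->|->]]; rewrite !neqs /=; ring.
Qed.

Section Case1.
Variable S : R.
Hypothesis S0 : 0 < S.
Variable A : Gamma1 R -> 'rV[R]_3.
Hypothesis dA : forall z, differentiable A z.
Hypothesis HT : forall a b z, on_Gamma1 z -> pb1 S (P1_i a) (fun w => A w 0 b) z = 0.
Hypothesis HR : forall a b c z, on_Gamma1 z ->
  pb1 S (J1 S a b) (fun w => A w 0 c) z = kdelta a c * A z 0 b - kdelta b c * A z 0 a.
Hypothesis HTR : forall z, on_Gamma1 z -> A (T1 z) = A z.

Lemma dAc1 c y : differentiable (fun w => A w 0 c) y.
Proof. exact: (differentiable_comp (dA y) (differentiable_coord _ 0 c)). Qed.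

Lemma DX1 a b (z : Gamma1 R) : on_Gamma1 z -> 'D_(dx1 a) (fun w => A w 0 b) z = 0.
Proof.
move=> Hz; have H := HT a b z Hz.
have G0 : grads (P1_i a) z = 0.
  by apply/rowP => d; rewrite !mxE /P1_i /p1 Dpv /ds1 /= mxE.
rewrite /pb1 G0 cross0l dot3E !mxE in H.
have Z : S^-1 * (sh1 z 0 i0 * 0 + sh1 z 0 i1 * 0 + sh1 z 0 i2 * 0) = 0 by ring.
rewrite Z addr0 sum3 /P1_i /p1 /= !Dpv /dp1 /e3 /= !mxE /= in H.
case: (ord3 a) H => [->|[->|->]]; rewrite !neqs.
- by with_strategy opaque [derive] apply: auxT0.
- by with_strategy opaque [derive] apply: auxT1.
- by with_strategy opaque [derive] apply: auxT2.
Qed.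

Lemma ROT1 (a b c : 'I_3) (z : Gamma1 R) : on_Gamma1 z ->
  z.1.2 0 b * 'D_(dp1 a) (fun w : Gamma1 R => A w 0 c) z - z.1.2 0 a * 'D_(dp1 b) (fun w : Gamma1 R => A w 0 c) z
  + \sum_i z.2 0 i * crs (eps3 a b) (fun j => 'D_(ds1 j) (fun w : Gamma1 R => A w 0 c) z) i
  = kdelta a c * A z 0 b - kdelta b c * A z 0 a.
Proof.
move=> Hz; rewrite -(HR a b c z Hz) /pb1.
have Z : \sum_c0 eps3 a b c0 * (S * (0 : 'rV[R]_3) 0 c0) = 0.
  by apply: big1 => c0 _; rewrite mxE !mulr0.
congr (_ + _).
  have E : forall d, 'D_(dx1 d) (J1 S a b) z * 'D_(dp1 d) (fun w => A w 0 c) z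
     - 'D_(dp1 d) (J1 S a b) z * 'D_(dx1 d) (fun w => A w 0 c) z
     = ('e_d : 'rV[R]_3) 0 a * (z.1.2 0 b * 'D_(dp1 d) (fun w => A w 0 c) z)
       - ('e_d : 'rV[R]_3) 0 b * (z.1.2 0 a * 'D_(dp1 d) (fun w => A w 0 c) z).
    move=> d; rewrite DJ1 (DX1 _ _ _ Hz) /dx1 /= Z !mxE /=.
    by with_strategy opaque [derive] ring.
  by rewrite (eq_bigr _ (fun d _ => E d)) sumrB !sum_e3.
have GJ : forall j, grads (J1 S a b) z 0 j = S * eps3 a b j.
  move=> j; rewrite mxE DJ1 /ds1 /= !mxE.
  have -> : \sum_c0 eps3 a b c0 * (S * e3 j 0 c0) = S * eps3 a b j.
    rewrite -(sum_e3c (fun c0 => S * eps3 a b c0) j); apply: eq_bigr => c0 _.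
    by rewrite /e3; ring.
  ring.
rewrite dot3E !cross3E /crs /= !GJ !mxE sum3 /crs /sh1 /=.
have SN : S != 0 by rewrite gt_eqF.
set D0 := 'D_(ds1 i0) _ z. set D1 := 'D_(ds1 i1) _ z. set D2 := 'D_(ds1 i2) _ z.
by field.
Qed.

Lemma main1 (z : Gamma1 R) : on_Gamma1 z -> \sum_(a < 3) A z 0 a * P1_i a z = 0.
Proof.
move=> Hz.
have SS : z.2 0 i0 ^+ 2 + z.2 0 i1 ^+ 2 + z.2 0 i2 ^+ 2 = 1.
  by move: Hz; rewrite /on_Gamma1 dot3E -!expr2.
have [n [NN [NP NS]]] := perp2 (fun j => z.1.2 0 j) (fun j => z.2 0 j) SS.
pose p := z.1.2. pose x := z.1.1. pose sh := z.2.
pose u := cv n p. pose us := cv n sh.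
pose g := fun s : R => (((x, cos s *: p + sin s *: u), cos s *: sh + sin s *: us) : Gamma1 R).
have Hg : forall s, on_Gamma1 (g s) := fun s => rot_vec2 _ _ s NN NS SS.
pose phi := fun s : R => \sum_c A (g s) 0 c * (cos s * p 0 c + sin s * u 0 c).
have Dphi : forall t : R, is_derive t 1 phi 0.
  move=> t.
  pose w1 := (- sin t) *: p + cos t *: u.
  pose w2 := (- sin t) *: sh + cos t *: us.
  have Dg : is_derive t 1 g (((0 : 'rV[R]_3), w1), w2).
    apply: (@is_derive_pair _ _ _ _ (fun s => (x, cos s *: p + sin s *: u))
      (fun s => cos s *: sh + sin s *: us) t 1 ((0 : 'rV[R]_3), w1) w2).
      apply: (@is_derive_pair _ _ _ _ (fun _ => x) (fun s => cos s *: p + sin s *: u) t 1 0 w1).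
      by apply: is_deriveD; apply: is_derive_scl.
    by apply: is_deriveD; apply: is_derive_scl.
  have DF : forall c, is_derive t 1 ((fun w => A w 0 c) \o g)
      ('D_(((0:'rV[R]_3), w1), w2) (fun w => A w 0 c) (g t)).
    by move=> c; apply: chain_rule => //; exact: dAc1.
  have DG : forall c, is_derive t 1 (fun s => cos s * p 0 c + sin s * u 0 c)
      (- sin t * p 0 c + cos t * u 0 c).
    by move=> c; apply: is_deriveD; apply: (@is_derive_scl _ R^o).
  have D := @is_derive_sumM _ _ (fun c => (fun w => A w 0 c) \o g)
    (fun c s => cos s * p 0 c + sin s * u 0 c) t 1 _ _ DF DG.
  apply: (is_derive_eq D).
  pose y := g t.
  pose q := fun j => cos t * p 0 j + sin t * u 0 j.
  pose sg := fun j => cos t * sh 0 j + sin t * us 0 j.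
  pose Dm := fun d c => 'D_(dp1 d) (fun w : Gamma1 R => A w 0 c) y.
  pose Ds := fun d c => 'D_(ds1 d) (fun w : Gamma1 R => A w 0 c) y.
  have HR' : forall a b c, q b * Dm a c - q a * Dm b c
      + \sum_i sg i * crs (eps3 a b) (fun j => Ds j c) i
      = kdelta a c * A y 0 b - kdelta b c * A y 0 a.
    move=> a b c; have := ROT1 a b c y (Hg t).
    have -> : y.1.2 = cos t *: p + sin t *: u by [].
    have -> : y.2 = cos t *: sh + sin t *: us by [].
    rewrite !rowE2 => <-; congr (_ + _).
    by apply: eq_bigr => i _; rewrite rowE2.
  have AL := @alg1 _ n q sg (fun c => A y 0 c) Dm Ds HR'.
  apply: (etrans _ AL); apply: eq_bigr => c _.
  rewrite derive_lin2; last exact: dAc1.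
  rewrite (rot_vec _ _ _ NN NP).
  congr (_ + _ * (_ + _)).
    by apply: eq_bigr => d _; rewrite rowE2 (rot_vec _ _ _ NN NP).
  by apply: eq_bigr => d _; rewrite rowE2 (rot_vec _ _ _ NN NS).
have E := @is_derive_0_is_cst _ phi 0 pi Dphi.
have g0 : g 0 = z.
  by rewrite /g cos0 sin0 !scale1r !scale0r !addr0 /x /p /sh -!surjective_pairing.
have gpi : g pi = T1 z by rewrite /g cospi sinpi !scaleN1r !scale0r !addr0.
rewrite /phi g0 gpi (HTR z Hz) cos0 sin0 cospi sinpi in E.
pose Sm := \sum_c A z 0 c * p 0 c.
have E1 : \sum_c A z 0 c * (1 * p 0 c + 0 * u 0 c) = Sm.
  by apply: eq_bigr => c _; ring.
have E2 : \sum_c A z 0 c * (-1 * p 0 c + 0 * u 0 c) = - Sm.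
  by rewrite /Sm -sumrN; apply: eq_bigr => c _; ring.
rewrite E1 E2 in E.
have -> : \sum_(a < 3) A z 0 a * P1_i a z = Sm by [].
lra.
Qed.
End Case1.

End H2.

Local Close Scope classical_set_scope.

Theorem mainTheorem10 (R : realType) (c m : R) (hc : 0 < c) (hm : 0 < m) :
  (* case (i): spin zero *)
  (forall A : Gamma0 R -> 'rV[R]_3,
     C1 A ->
     (forall (a b : 'I_3) z, pb0 (P0_i a) (fun w => A w 0 b) z = 0) ->
     (forall (a b c' : 'I_3) z,
        pb0 (J0 a b) (fun w => A w 0 c') z
        = kdelta a c' * A z 0 b - kdelta b c' * A z 0 a) ->
     (forall z, A (T0 z) = A z) ->
     forall z, \sum_(a < 3) A z 0 a * P0_i a z = 0)
  /\
  (* case (ii): spin S > 0 *)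
  (forall (S : R), 0 < S ->
   forall A : Gamma1 R -> 'rV[R]_3,
     C1 A ->
     (forall (a b : 'I_3) z, on_Gamma1 z ->
        pb1 S (P1_i a) (fun w => A w 0 b) z = 0) ->
     (forall (a b c' : 'I_3) z, on_Gamma1 z ->
        pb1 S (J1 S a b) (fun w => A w 0 c') z
        = kdelta a c' * A z 0 b - kdelta b c' * A z 0 a) ->
     (forall z, on_Gamma1 z -> A (T1 z) = A z) ->
     forall z, on_Gamma1 z -> \sum_(a < 3) A z 0 a * P1_i a z = 0).
Proof.
split.
  move=> A [dA _] HT HR HTR z.
  exact: (@main0 R A dA HT HR HTR z).
move=> S S0 A [dA _] HT HR HTR z Hz.
exact: (@main1 R S S0 A dA HT HR HTR z Hz).
Qed.
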